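(* Let $\varepsilon$ be a splitting on $M$ and let $\omega$ be the 1-form of the Lie algebroid $J_1T$ with local components $(\omega_i,\omega^i_j)=(\Gamma^a_{ia},-\delta^i_j)$, i.e. $\omega(X)=X^a\Gamma^b_{ab}-X^a_a$ for $X=(X^i,X^i_j)$. Then $\delta\omega=0$, but $\omega$ is not locally exact: there is no open set $W\neq\emptyset$ and smooth function $f$ on $W$ with $\delta f=\omega$ on $W$.
   Context: $M$ is a connected smooth manifold, $\dim M=n\ge2$, summation convention. A splitting $\varepsilon$ assigns smoothly to each $(p,q)$ a linear isomorphism $\varepsilon^{p,q}:T_pM\to T_qM$ with $\varepsilon^{q,r}\circ\varepsilon^{p,q}=\varepsilon^{p,r}$, $\varepsilon^{p,p}=\mathrm{id}$; in charts $\varepsilon^{p,q}(\partial/\partial x^j)=\varepsilon^i_j(x,y)\partial/\partial y^i$, and $\Gamma^i_{jk}(x)=[\partial\varepsilon^i_k(x,y)/\partial y^j]_{y=x}$. $J_1T\to M$ is the bundle of 1-jets of vector fields; a section is locally $X=(X^i,X^i_j)$, with projection $\pi X=(X^i)\in TM$. The bracket of sections is $[X,Y]^i=X^a\partial_aY^i-Y^a\partial_aX^i$, $[X,Y]^i_j=X^a_jY^i_a-Y^a_jX^i_a+X^a\partial_aY^i_j-Y^a\partial_aX^i_j$. $J_1T$ acts on functions by $X(f)=(\pi X)(f)$. A 1-form of $J_1T$ is a section of $(J_1T)^*$, locally $(\omega_i,\omega^i_j)$ pairing as $\omega(X)=X^a\omega_a+X^a_b\omega^b_a$. Its differential is $\delta\omega(X,Y)=(\pi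 X)(\omega(Y))-(\pi Y)(\omega(X))-\omega([X,Y])$; for a function $f$, $\delta f(X)=(\pi X)(f)$, i.e. $\delta f$ has components $(\partial_if,0)$. *)

(* Defs.v *)
From Stdlib Require Import Reals ClassicalEpsilon.
From mathcomp Require Import all_boot.
Set Implicit Arguments.
Unset Strict Implicit.
Open Scope R_scope.

Definition sumI (I : finType) (f : I -> R) : R := foldr Rplus 0 (map f (enum I)).

Definition kdelta (I : eqType) (i j : I) : R := if i == j then 1 else 0.

Definition upd (I : finType) (x : I -> R) (i : I) (t : R) : I -> R :=
  fun k => if k == i then t else x k.

Definition has_pd (I : finType) (f : (I -> R) -> R) (i : I) (x : I -> R) (l : R) : Prop :=
  derivable_pt_lim (fun t => f (upd x i t)) (x i) l.

(** The partial derivative (its value, when it exists; an arbitrary value otherwise). *)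
Definition pd (I : finType) (f : (I -> R) -> R) (i : I) (x : I -> R) : R :=
  epsilon (inhabits 0) (fun l => has_pd f i x l).

Definition is_open (I : finType) (U : (I -> R) -> Prop) : Prop :=
  forall x, U x -> exists r, 0 < r /\
    forall y, (forall i, Rabs (y i - x i) < r) -> U y.

Definition cont_on (I : finType) (U : (I -> R) -> Prop) (f : (I -> R) -> R) : Prop :=
  forall x, U x -> forall e, 0 < e -> exists d, 0 < d /\
    forall y, U y -> (forall i, Rabs (y i - x i) < d) -> Rabs (f y - f x) < e.

Fixpoint Ck (I : finType) (k : nat) (U : (I -> R) -> Prop) (f : (I -> R) -> R) : Prop :=
  cont_on U f /\
  match k with
  | O => True
  | S k' => forall i, (forall x, U x -> exists l, has_pd f i x l) /\ Ck k' U (pd f i)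
  end.

Definition smooth (I : finType) (U : (I -> R) -> Prop) (f : (I -> R) -> R) : Prop :=
  forall k, Ck k U f.

(** Local data of a splitting over a chart domain U (open in R^n):
    eps x y i j = eps^i_j(x,y), where eps^{x,y}(d/dx^j) = eps^i_j(x,y) d/dy^i.
    Smooth jointly in (x,y) on U x U, cocycle eps^{y,z} o eps^{x,y} = eps^{x,z},
    and eps^{x,x} = id.  (Invertibility follows from these.) *)
Definition is_splitting (n : nat) (U : ('I_n -> R) -> Prop)
    (eps : ('I_n -> R) -> ('I_n -> R) -> 'I_n -> 'I_n -> R) : Prop :=
  (forall i j, smooth
       (fun z : ('I_n + 'I_n)%type -> R => U (fun k => z (inl k)) /\ U (fun k => z (inr k)))
       (fun z : ('I_n + 'I_n)%type -> R => eps (fun k => z (inl k)) (fun k => z (inr k)) i j))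
  /\ (forall x y z, U x -> U y -> U z -> forall i j,
        eps x z i j = sumI (fun k => eps y z i k * eps x y k j))
  /\ (forall x, U x -> forall i j, eps x x i j = kdelta i j).

Definition Gamma (n : nat) (eps : ('I_n -> R) -> ('I_n -> R) -> 'I_n -> 'I_n -> R)
    (i j k : 'I_n) (x : 'I_n -> R) : R :=
  pd (fun y => eps x y i k) j x.

(** Local sections of J_1T: X = (X^i, X^i_j), with X.2 x i j = X^i_j. *)
Definition jsec (n : nat) : Type :=
  ((('I_n -> R) -> 'I_n -> R) * (('I_n -> R) -> 'I_n -> 'I_n -> R))%type.

Definition smooth_sec (n : nat) (W : ('I_n -> R) -> Prop) (X : jsec n) : Prop :=
  (forall i, smooth W (fun x => X.1 x i)) /\ (forall i j, smooth W (fun x => X.2 x i j)).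

Definition brv (n : nat) (X Y : jsec n) (x : 'I_n -> R) (i : 'I_n) : R :=
  sumI (fun a => X.1 x a * pd (fun z => Y.1 z i) a x - Y.1 x a * pd (fun z => X.1 z i) a x).

Definition brm (n : nat) (X Y : jsec n) (x : 'I_n -> R) (i j : 'I_n) : R :=
  sumI (fun a => X.2 x a j * Y.2 x i a - Y.2 x a j * X.2 x i a)
  + sumI (fun a => X.1 x a * pd (fun z => Y.2 z i j) a x
                   - Y.1 x a * pd (fun z => X.2 z i j) a x).

Definition bracket (n : nat) (X Y : jsec n) : jsec n := (brv X Y, brm X Y).

(** 1-forms of J_1T: (omega_i, omega^i_j), with om.2 x i j = omega^i_j. *)
Definition oneform (n : nat) : Type :=
  ((('I_n -> R) -> 'I_n -> R) * (('I_n -> R) -> 'I_n -> 'I_n -> R))%type.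

Definition ev (n : nat) (om : oneform n) (X : jsec n) (x : 'I_n -> R) : R :=
  sumI (fun a => X.1 x a * om.1 x a)
  + sumI (fun a => sumI (fun b => X.2 x a b * om.2 x b a)).

Definition vf (n : nat) (X : jsec n) (g : ('I_n -> R) -> R) (x : 'I_n -> R) : R :=
  sumI (fun c => X.1 x c * pd g c x).

Definition dform (n : nat) (om : oneform n) (X Y : jsec n) (x : 'I_n -> R) : R :=
  vf X (ev om Y) x - vf Y (ev om X) x - ev om (bracket X Y) x.

Definition dfun (n : nat) (f : ('I_n -> R) -> R) : oneform n :=
  (fun x i => pd f i x, fun _ _ _ => 0).

Definition omega (n : nat) (eps : ('I_n -> R) -> ('I_n -> R) -> 'I_n -> 'I_n -> R) : oneform n :=
  (fun x i => sumI (fun a => Gamma eps a i a x), fun _ i j => - kdelta i j).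

(* Main.v *)
Require Import Defs.
From Stdlib Require Import Reals Lra ClassicalEpsilon FunctionalExtensionality.
From mathcomp Require Import all_boot.
From Coquelicot Require Import Coquelicot.
Open Scope R_scope.
Set Implicit Arguments.
Unset Strict Implicit.

Definition sl {T : Type} (l : seq T) (f : T -> R) : R := foldr Rplus 0 (map f l).

Lemma sl_ext T l (f g : T -> R) : (forall a, f a = g a) -> sl l f = sl l g.
Proof. move=> H; elim: l => //= a l IH; rewrite /sl /= in IH *; rewrite H IH //. Qed.

Lemma sl_add T l (f g : T -> R) : sl l (fun a => f a + g a) = sl l f + sl l g.
Proof. elim: l => [|a l IH]; rewrite /sl /= ?IH; [lra|]. rewrite /sl in IH; rewrite IH; lra. Qed.

Lemma sl_mulr T l k (f : T -> R) : sl l (fun a => k * f a) = k * sl l f.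
Proof. elim: l => [|a l IH]; rewrite /sl /=; [lra|]. rewrite /sl in IH; rewrite IH; lra. Qed.

Lemma sl_opp T l (f : T -> R) : sl l (fun a => - f a) = - sl l f.
Proof. elim: l => [|a l IH]; rewrite /sl /=; [lra|]. rewrite /sl in IH; rewrite IH; lra. Qed.

Lemma sl_sub T l (f g : T -> R) : sl l (fun a => f a - g a) = sl l f - sl l g.
Proof. elim: l => [|a l IH]; rewrite /sl /=; [lra|]. rewrite /sl in IH; rewrite IH; lra. Qed.

Lemma sl_swap T U l1 l2 (f : T -> U -> R) :
  sl l1 (fun a => sl l2 (fun b => f a b)) = sl l2 (fun b => sl l1 (fun a => f a b)).
Proof.
elim: l1 => [|a l IH].
  rewrite /sl /=. elim: l2 => //= b l2 IH2. rewrite -IH2; lra.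
rewrite {1}/sl /=. rewrite /sl in IH. rewrite IH.
have := sl_add l2 (f a) (fun b => sl l (fun a => f a b)). rewrite /sl /= => ->. done.
Qed.

Lemma sl_kdelta (I : eqType) (l : seq I) (f : I -> R) a : uniq l ->
  sl l (fun b => f b * kdelta b a) = if a \in l then f a else 0.
Proof.
elim: l => [|b l IH] //= /andP [bl ul]. rewrite {1}/sl /=. rewrite /sl in IH. rewrite IH //.
rewrite in_cons /kdelta. case: (eqVneq b a) => [<-|ne].
  rewrite (negbTE bl) /=. lra.
simpl. case: (a \in l); lra.
Qed.

Lemma sumIE (I : finType) (f : I -> R) : sumI f = sl (enum I) f.
Proof. by []. Qed.

Lemma sumI_kdelta (I : finType) (f : I -> R) a : sumI (fun b => f b * kdelta b a) = f a.
Proof. rewrite sumIE sl_kdelta ?enum_uniq // mem_enum //. Qed.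

Lemma kdelta_sym (I : eqType) (i j : I) : kdelta i j = kdelta j i.
Proof. by rewrite /kdelta eq_sym. Qed.

Lemma sumI_kdelta' (I : finType) (f : I -> R) a : sumI (fun b => kdelta a b * f b) = f a.
Proof. rewrite -(sumI_kdelta f a). apply: sl_ext => b. rewrite kdelta_sym; lra. Qed.

Lemma dpl_sl T (l : seq T) (F : T -> R -> R) L x :
  (forall a, derivable_pt_lim (F a) x (L a)) ->
  derivable_pt_lim (fun t => sl l (fun a => F a t)) x (sl l L).
Proof.
move=> H; elim: l => [|a l IH].
  exact: (derivable_pt_lim_const 0 x).
rewrite /sl /=. rewrite /sl in IH.
exact: (derivable_pt_lim_plus _ _ _ _ _ (H a) IH).
Qed.

Lemma dpl_loc f g x l r : 0 < r -> (forall t, Rabs (t - x) < r -> f t = g t) ->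
  derivable_pt_lim f x l -> derivable_pt_lim g x l.
Proof.
move=> r0 Heq H e e0. case: (H e e0) => d Hd.
have m0 : 0 < Rmin d r by apply Rmin_pos; [apply cond_pos|].
exists (mkposreal _ m0) => h hn hl /=. simpl in hl.
rewrite -!Heq. apply Hd => //. apply: Rlt_le_trans hl _; apply Rmin_l.
rewrite Rminus_diag Rabs_R0 //.
replace (x + h - x) with h by ring. apply: Rlt_le_trans hl _; apply Rmin_r.
Qed.

Lemma pd_unique (I : finType) (f : (I -> R) -> R) i p l : has_pd f i p l -> pd f i p = l.
Proof.
move=> H. rewrite /pd. have ex : exists l, has_pd f i p l by exists l.
have := epsilon_spec (inhabits 0) _ ex. move=> H2. exact: uniqueness_limite H2 H.
Qed.
Lemma upd_same (I : finType) (p : I -> R) i : upd p i (p i) = p.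
Proof. apply: functional_extensionality => k; rewrite /upd; case: eqP => [->|] //. Qed.

Lemma upd_at (I : finType) (p : I -> R) i t : upd p i t i = t.
Proof. by rewrite /upd eq_refl. Qed.

Section HP.
Variables (I : finType) (i : I) (p : I -> R).

Lemma hp_const c : has_pd (fun _ => c) i p 0.
Proof. exact: derivable_pt_lim_const. Qed.

Lemma hp_add f g lf lg : has_pd f i p lf -> has_pd g i p lg ->
  has_pd (fun y => f y + g y) i p (lf + lg).
Proof. move=> H1 H2. exact: (derivable_pt_lim_plus _ _ _ _ _ H1 H2). Qed.

Lemma hp_opp f lf : has_pd f i p lf -> has_pd (fun y => - f y) i p (- lf).
Proof. move=> H1. exact: (derivable_pt_lim_opp _ _ _ H1). Qed.

Lemma hp_sub f g lf lg : has_pd f i p lf -> has_pd g i p lg ->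
  has_pd (fun y => f y - g y) i p (lf - lg).
Proof. move=> H1 H2. exact: (hp_add H1 (hp_opp H2)). Qed.

Lemma hp_mul f g lf lg : has_pd f i p lf -> has_pd g i p lg ->
  has_pd (fun y => f y * g y) i p (lf * g p + f p * lg).
Proof.
move=> H1 H2. have := derivable_pt_lim_mult _ _ _ _ _ H1 H2.
rewrite /= upd_same. exact.
Qed.

Lemma hp_sum (J : finType) (F : J -> (I -> R) -> R) L :
  (forall a, has_pd (F a) i p (L a)) ->
  has_pd (fun y => sumI (fun a => F a y)) i p (sumI L).
Proof. move=> H. exact: (@dpl_sl _ (enum J) (fun a t => F a (upd p i t)) L (p i) H). Qed.

Lemma hp_eq f l l' : l = l' -> has_pd f i p l -> has_pd f i p l'.
Proof. by move=> ->. Qed.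

Lemma open_line V : is_open V -> V p -> exists r, 0 < r /\
  forall t, Rabs (t - p i) < r -> V (upd p i t).
Proof.
move=> Vo Vp. case: (Vo p Vp) => r [r0 Hr]. exists r; split => // t Ht.
apply: Hr => k. rewrite /upd. case: eqP => [->|_] //. rewrite Rminus_diag Rabs_R0 //.
Qed.

Lemma hp_loc V f g l : is_open V -> V p -> (forall y, V y -> f y = g y) ->
  has_pd f i p l -> has_pd g i p l.
Proof.
move=> Vo Vp Heq H. case: (open_line Vo Vp) => r [r0 Hr].
apply: (dpl_loc r0 _ H) => t Ht. apply: Heq. exact: Hr.
Qed.

End HP.

Lemma Ck_cont (I : finType) k V (f : (I -> R) -> R) : Ck k V f -> cont_on V f.
Proof. by case: k => [|k] []. Qed.

Lemma Ck_S_hp (I : finType) k V (f : (I -> R) -> R) i p : Ck k.+1 V f -> V p ->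
  has_pd f i p (pd f i p).
Proof.
move=> [_ H] Vp. case: (H i) => [ex _]. case: (ex p Vp) => l Hl. by rewrite (pd_unique Hl).
Qed.

Lemma Ck_S_pd (I : finType) k V (f : (I -> R) -> R) i : Ck k.+1 V f -> Ck k V (pd f i).
Proof. by move=> [_ H]; case: (H i). Qed.

Lemma Ck_mono (I : finType) k V V' (f : (I -> R) -> R) : (forall y, V' y -> V y) ->
  Ck k V f -> Ck k V' f.
Proof.
elim: k f => [|k IH] f HV [Hc H].
  split => // x Vx e e0. case: (Hc x (HV x Vx) e e0) => d [d0 Hd].
  exists d; split => // y Vy; exact: Hd (HV y Vy).
split.
  move=> x Vx e e0. case: (Hc x (HV x Vx) e e0) => d [d0 Hd].
  exists d; split => // y Vy; exact: Hd (HV y Vy).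
move=> i; case: (H i) => [ex Hk]; split; last exact: IH.
move=> x Vx; exact: ex (HV x Vx).
Qed.

Section Transfer.
Variables (I J : finType) (phi : (J -> R) -> (I -> R)) (s : J -> I).
Hypothesis H1 : forall y j t, phi (upd y j t) = upd (phi y) (s j) t.
Hypothesis H2 : forall y j, phi y (s j) = y j.
Hypothesis H3 : forall y y' d, 0 < d -> (forall j, Rabs (y' j - y j) < d) ->
  forall i, Rabs (phi y' i - phi y i) < d.

Lemma pd_comp f j : pd (fun y => f (phi y)) j = fun y => pd f (s j) (phi y).
Proof.
apply: functional_extensionality => y. rewrite /pd /has_pd.
have -> : (fun t => f (phi (upd y j t))) = (fun t => f (upd (phi y) (s j) t)).
  apply: functional_extensionality => t; by rewrite H1.
by rewrite -(H2 y j).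
Qed.

Lemma hp_comp f j y l : has_pd f (s j) (phi y) l -> has_pd (fun y => f (phi y)) j y l.
Proof.
rewrite /has_pd H2.
have -> : (fun t => f (phi (upd y j t))) = (fun t => f (upd (phi y) (s j) t)).
  apply: functional_extensionality => t; by rewrite H1.
done.
Qed.

Lemma Ck_comp k V f : Ck k V f -> Ck k (fun y => V (phi y)) (fun y => f (phi y)).
Proof.
have cont : forall g, cont_on V g -> cont_on (fun y => V (phi y)) (fun y => g (phi y)).
  move=> g Hc x Vx e e0. case: (Hc _ Vx e e0) => d [d0 Hd].
  exists d; split => // y Vy Hy. apply: Hd => //. exact: H3.
elim: k f => [|k IH] f [Hc H]; split => //; first exact: cont.
  exact: cont.
move=> j; split.
  move=> y Vy. case: (H (s j)) => [ex _]. case: (ex _ Vy) => l Hl.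
  exists l; exact: hp_comp.
rewrite pd_comp. apply: IH. by case: (H (s j)).
Qed.
End Transfer.
Lemma dpl_Derive h x l : derivable_pt_lim h x l -> Derive h x = l.
Proof. move=> H. apply: is_derive_unique. by apply/is_derive_Reals. Qed.

Lemma dpl_ex h x l : derivable_pt_lim h x l -> ex_derive h x.
Proof. move=> H. exists l. by apply/is_derive_Reals. Qed.

Lemma hp_line (I : finType) (g : (I -> R) -> R) i q l (L : R -> I -> R) :
  has_pd g i q l -> (forall t, upd q i t = L t) -> derivable_pt_lim (fun t => g (L t)) (q i) l.
Proof.
rewrite /has_pd => H HL.
have <- : (fun t => g (upd q i t)) = (fun t => g (L t)).
  apply: functional_extensionality => t; by rewrite HL.
exact H.
Qed.

Lemma schwarz_pd (I : finType) V (g : (I -> R) -> R) p a c : is_open V -> V p -> a != c ->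
  Ck 2 V g -> pd (pd g c) a p = pd (pd g a) c p.
Proof.
move=> Vo Vp ac Hg.
pose pt u v := upd (upd p a u) c v.
have pt_a : forall u v z, upd (pt u v) a z = pt z v.
  move=> u v z; apply: functional_extensionality => k; rewrite /pt /upd.
  case: (eqVneq k a) => [->|ka]; case: (eqVneq k c) => [kc|kc] //.
  by rewrite (negbTE ac).
  by rewrite (negbTE ac).
have pt_c : forall u v z, upd (pt u v) c z = pt u z.
  move=> u v z; apply: functional_extensionality => k; rewrite /pt /upd.
  by case: (eqVneq k c).
have pt_va : forall u v, pt u v a = u.
  move=> u v; by rewrite /pt /upd (negbTE ac) eq_refl.
have pt_vc : forall u v, pt u v c = v.
  move=> u v; by rewrite /pt /upd eq_refl.
have pt_p : pt (p a) (p c) = p.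
  by rewrite /pt !upd_same.
have pt_near : forall u v d, Rabs (u - p a) < d -> Rabs (v - p c) < d ->
    forall k, Rabs (pt u v k - p k) < d.
  move=> u v d Hu Hv k. rewrite /pt /upd.
  case: (eqVneq k c) => [->|_] //. case: (eqVneq k a) => [->|_] //.
  rewrite Rminus_diag Rabs_R0. apply: Rle_lt_trans Hu. apply Rabs_pos.
case: (Vo p Vp) => r [r0 Hr].
have Vpt : forall u v, Rabs (u - p a) < r -> Rabs (v - p c) < r -> V (pt u v).
  move=> u v Hu Hv. apply: Hr => k. exact: pt_near.
pose f u v := g (pt u v).
have Hg1 : Ck 1 V (pd g c) by exact: Ck_S_pd Hg.
have Hg1' : Ck 1 V (pd g a) by exact: Ck_S_pd Hg.
have Dc : forall z v, V (pt z v) -> Derive (fun t => f z t) v = pd g c (pt z v).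
  move=> z v Vz. apply: dpl_Derive. rewrite -{1}(pt_vc z v).
  apply: (hp_line (Ck_S_hp c Hg Vz)) => t. exact: pt_c.
have Da : forall u z, V (pt u z) -> Derive (fun t => f t z) u = pd g a (pt u z).
  move=> u z Vz. apply: dpl_Derive. rewrite -{1}(pt_va u z).
  apply: (hp_line (Ck_S_hp a Hg Vz)) => t. exact: pt_a.
have HA : forall u v, Rabs (u - p a) < r -> Rabs (v - p c) < r ->
    derivable_pt_lim (fun z => Derive (fun t => f z t) v) u (pd (pd g c) a (pt u v)).
  move=> u v Hu Hv.
  have H0 := hp_line (Ck_S_hp a Hg1 (Vpt u v Hu Hv)) (pt_a u v).
  rewrite pt_va in H0.
  have rp : 0 < r - Rabs (u - p a) by lra.
  apply: (dpl_loc rp _ H0) => z Hz. rewrite Dc //. apply: Vpt => //.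
  have := Rabs_triang (z - u) (u - p a). replace (z - u + (u - p a)) with (z - p a) by ring. lra.
have HB : forall u v, Rabs (u - p a) < r -> Rabs (v - p c) < r ->
    derivable_pt_lim (fun z => Derive (fun t => f t z) u) v (pd (pd g a) c (pt u v)).
  move=> u v Hu Hv.
  have H0 := hp_line (Ck_S_hp c Hg1' (Vpt u v Hu Hv)) (pt_c u v).
  rewrite pt_vc in H0.
  have rp : 0 < r - Rabs (v - p c) by lra.
  apply: (dpl_loc rp _ H0) => z Hz. rewrite Da //. apply: Vpt => //.
  have := Rabs_triang (z - v) (v - p c). replace (z - v + (v - p c)) with (z - p c) by ring. lra.
have cont2 : forall (h : (I -> R) -> R) (F : R -> R -> R), cont_on V h ->
    (forall u v, Rabs (u - p a) < r -> Rabs (v - p c) < r -> F u v = h (pt u v)) ->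
    continuity_2d_pt F (p a) (p c).
  move=> h F Hc HF e. case: (Hc p Vp e (cond_pos e)) => d [d0 Hd].
  have m0 : 0 < Rmin r d by apply Rmin_pos.
  exists (mkposreal _ m0) => u v /= Hu Hv.
  have Hur : Rabs (u - p a) < r by apply: Rlt_le_trans Hu _; apply Rmin_l.
  have Hvr : Rabs (v - p c) < r by apply: Rlt_le_trans Hv _; apply Rmin_l.
  rewrite HF // HF; try by rewrite Rminus_diag Rabs_R0.
  rewrite pt_p. apply: Hd; first exact: Vpt.
  apply: pt_near; apply: Rlt_le_trans; try apply Rmin_r; eassumption.
have := @Schwarz f (p a) (p c).
rewrite (dpl_Derive (HA _ _ _ _)); try by rewrite Rminus_diag Rabs_R0.
rewrite (dpl_Derive (HB _ _ _ _)); try by rewrite Rminus_diag Rabs_R0.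
rewrite pt_p. apply.
- exists (mkposreal _ r0) => u v /= Hu Hv. have Vuv := Vpt u v Hu Hv.
  split; [|split; [|split]].
  + apply: dpl_ex. rewrite -{1}(pt_va u v).
    exact: (hp_line (Ck_S_hp a Hg Vuv) (pt_a u v)).
  + apply: dpl_ex. rewrite -{1}(pt_vc u v).
    exact: (hp_line (Ck_S_hp c Hg Vuv) (pt_c u v)).
  + exact: dpl_ex (HA u v Hu Hv).
  + exact: dpl_ex (HB u v Hu Hv).
- apply: (cont2 (pd (pd g c) a)).
    apply: Ck_cont. exact: Ck_S_pd Hg1.
  move=> u v Hu Hv. exact: dpl_Derive (HA u v Hu Hv).
- apply: (cont2 (pd (pd g a) c)).
    apply: Ck_cont. exact: Ck_S_pd Hg1'.
  move=> u v Hu Hv. exact: dpl_Derive (HB u v Hu Hv).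
Qed.
Section SumI.
Variable I : finType.
Lemma sumI_ext (f g : I -> R) : (forall a, f a = g a) -> sumI f = sumI g.
Proof. exact: sl_ext. Qed.
Lemma sumI_add (f g : I -> R) : sumI (fun a => f a + g a) = sumI f + sumI g.
Proof. exact: sl_add. Qed.
Lemma sumI_sub (f g : I -> R) : sumI (fun a => f a - g a) = sumI f - sumI g.
Proof. exact: sl_sub. Qed.
Lemma sumI_opp (f : I -> R) : sumI (fun a => - f a) = - sumI f.
Proof. exact: sl_opp. Qed.
Lemma sumI_mulr k (f : I -> R) : sumI (fun a => k * f a) = k * sumI f.
Proof. exact: sl_mulr. Qed.
Lemma sumI_mull k (f : I -> R) : sumI (fun a => f a * k) = sumI f * k.
Proof. rewrite Rmult_comm -sumI_mulr; apply: sumI_ext => a; ring. Qed.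
Lemma sumI_swap (f : I -> I -> R) :
  sumI (fun a => sumI (fun b => f a b)) = sumI (fun b => sumI (fun a => f a b)).
Proof. exact: sl_swap. Qed.
Lemma sumI_diag (T : I -> I -> R) (Z : I -> I -> R) :
  sumI (fun a => sumI (fun b => T a b * - kdelta b a + Z a b * 0)) = - sumI (fun a => T a a).
Proof.
rewrite -sumI_opp; apply: sumI_ext => a.
rewrite -(sumI_kdelta (fun b => - T a b) a); apply: sumI_ext => b; ring.
Qed.
Lemma sumI_diag' (T : I -> I -> R) :
  sumI (fun a => sumI (fun b => T a b * - kdelta b a)) = - sumI (fun a => T a a).
Proof.
rewrite -sumI_opp; apply: sumI_ext => a.
rewrite -(sumI_kdelta (fun b => - T a b) a); apply: sumI_ext => b; ring.
Qed.
End SumI.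

Lemma alg (I : finType) (Xv Yv : I -> R) (Xm Ym dXv dYv : I -> I -> R)
  (dXm dYm : I -> I -> I -> R) (g : I -> R) (dg : I -> I -> R) :
  (forall a c, dg a c = dg c a) ->
  sumI (fun c => Xv c * (sumI (fun a => dYv c a * g a + Yv a * dg a c)
       + sumI (fun a => sumI (fun b => dYm c a b * - kdelta b a + Ym a b * 0))))
  - sumI (fun c => Yv c * (sumI (fun a => dXv c a * g a + Xv a * dg a c)
       + sumI (fun a => sumI (fun b => dXm c a b * - kdelta b a + Xm a b * 0))))
  - (sumI (fun a => sumI (fun c => Xv c * dYv c a - Yv c * dXv c a) * g a)
     + sumI (fun a => sumI (fun b => (sumI (fun c => Xm c b * Ym a c - Ym c b * Xm a c)
          + sumI (fun c => Xv c * dYm c a b - Yv c * dXm c a b)) * - kdelta b a))) = 0.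
Proof.
move=> dgs.
rewrite (sumI_diag' (fun a b => sumI (fun c => Xm c b * Ym a c - Ym c b * Xm a c)
          + sumI (fun c => Xv c * dYm c a b - Yv c * dXm c a b))).
have E1 : forall (Av Bv : I -> R) (dBv : I -> I -> R) (dBm : I -> I -> I -> R) (Bm : I -> I -> R),
  sumI (fun c => Av c * (sumI (fun a => dBv c a * g a + Bv a * dg a c)
       + sumI (fun a => sumI (fun b => dBm c a b * - kdelta b a + Bm a b * 0))))
  = sumI (fun c => sumI (fun a => Av c * dBv c a * g a + Av c * Bv a * dg a c - Av c * dBm c a a)).
  move=> Av Bv dBv dBm Bm. apply: sumI_ext => c. rewrite sumI_diag -sumI_opp -sumI_add -sumI_mulr.
  apply: sumI_ext => a; ring.
rewrite !E1.
have E2 : sumI (fun a => sumI (fun c => Xv c * dYv c a - Yv c * dXv c a) * g a)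
   = sumI (fun c => sumI (fun a => (Xv c * dYv c a - Yv c * dXv c a) * g a)).
  rewrite -sumI_swap. apply: sumI_ext => a. by rewrite sumI_mull.
have E3 : sumI (fun a => sumI (fun c => Xm c a * Ym a c - Ym c a * Xm a c)
          + sumI (fun c => Xv c * dYm c a a - Yv c * dXm c a a))
   = sumI (fun c => sumI (fun a => Xm c a * Ym a c - Ym c a * Xm a c
          + (Xv c * dYm c a a - Yv c * dXm c a a))).
  rewrite -sumI_swap. apply: sumI_ext => a. by rewrite sumI_add.
rewrite E2 E3 -!sumI_opp -!sumI_add -!sumI_sub.
transitivity (sumI (fun c => sumI (fun a => Xv c * Yv a * dg a c) - sumI (fun a => Yv c * Xv a * dg a c)
   + (sumI (fun a => Xm c a * Ym a c) - sumI (fun a => Ym c a * Xm a c)))).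
  apply: sumI_ext => c. rewrite -sumI_opp -sumI_add -!sumI_sub -?sumI_add -?sumI_sub -?sumI_add.
  apply: sumI_ext => a; ring.
have Hs1 : sumI (fun c => sumI (fun a => Yv c * Xv a * dg a c))
    = sumI (fun c => sumI (fun a => Xv c * Yv a * dg a c)).
  rewrite sumI_swap. apply: sumI_ext => c; apply: sumI_ext => a; rewrite dgs; ring.
have Hs2 : sumI (fun c => sumI (fun a => Ym c a * Xm a c))
    = sumI (fun c => sumI (fun a => Xm c a * Ym a c)).
  rewrite sumI_swap. apply: sumI_ext => c; apply: sumI_ext => a; ring.
rewrite sumI_add !sumI_sub Hs1 Hs2. ring.
Qed.
Section Split.
Variables (n : nat) (U : ('I_n -> R) -> Prop)
  (eps : ('I_n -> R) -> ('I_n -> R) -> 'I_n -> 'I_n -> R).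
Hypothesis Uo : is_open U.
Hypothesis Hs : is_splitting U eps.
Variable x : 'I_n -> R.
Hypothesis Ux : U x.

Definition phiR (y : 'I_n -> R) : ('I_n + 'I_n)%type -> R :=
  fun k => match k with inl k => x k | inr k => y k end.
Definition phiL (y : 'I_n -> R) : ('I_n + 'I_n)%type -> R :=
  fun k => match k with inl k => y k | inr k => x k end.

Lemma E_smooth i m k : Ck k U (fun y => eps x y i m).
Proof.
case: Hs => [Hsm _]. have := Ck_comp (phi := phiR) (s := inr) _ _ _ (Hsm i m k).
move=> H. apply: (Ck_mono _ (H _ _ _)) => //.
- move=> y j t; apply: functional_extensionality => [[k'|k']] //=.
- move=> y y' d d0 Hy [k'|k'] /=; last exact: Hy. by rewrite Rminus_diag Rabs_R0.
Qed.

Lemma F_smooth i m k : Ck k U (fun y => eps y x i m).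
Proof.
case: Hs => [Hsm _]. have := Ck_comp (phi := phiL) (s := inl) _ _ _ (Hsm i m k).
move=> H. apply: (Ck_mono _ (H _ _ _)) => //.
- move=> y j t; apply: functional_extensionality => [[k'|k']] //=.
- move=> y y' d d0 Hy [k'|k'] /=; first exact: Hy. by rewrite Rminus_diag Rabs_R0.
Qed.

Definition P a i m := pd (fun y => eps x y i m) a.

Lemma hpE a i m y : U y -> has_pd (fun y => eps x y i m) a y (P a i m y).
Proof. move=> Uy. exact: (Ck_S_hp a (E_smooth i m 1) Uy). Qed.

Lemma Gam y a b : U y -> Gamma eps b a b y = sumI (fun m => P a b m y * eps y x m b).
Proof.
move=> Uy. case: Hs => [_ [Hc _]]. rewrite /Gamma. apply: pd_unique.
apply: (hp_loc (f := fun z => sumI (fun m => eps x z b m * eps y x m b)) Uo Uy).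
  move=> z Uz. by rewrite (Hc y x z Uy Ux Uz).
apply: (hp_eq _ (hp_sum (fun m => hp_mul (hpE a b m Uy) (hp_const _ _ (eps y x m b))))).
apply: sumI_ext => m; ring.
Qed.

Lemma dF c i j : pd (fun y => eps y x i j) c x = - P c i j x.
Proof.
case: Hs => [_ [Hc Hd]].
have H1 : has_pd (fun y => sumI (fun k => eps x y i k * eps y x k j)) c x
   (sumI (fun k => P c i k x * eps x x k j + eps x x i k * pd (fun y => eps y x k j) c x)).
  apply: hp_sum => k. apply: hp_mul; first exact: hpE.
  exact: (Ck_S_hp c (F_smooth k j 1) Ux).
have H2 : has_pd (fun y => sumI (fun k => eps x y i k * eps y x k j)) c x 0.
  apply: (hp_loc (f := fun _ => kdelta i j) Uo Ux); last exact: hp_const.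
  move=> y Uy. by rewrite -(Hc y x y Uy Ux Uy) Hd.
have := uniqueness_limite _ _ _ _ H1 H2.
rewrite sumI_add.
rewrite (sumI_ext (g := fun k => P c i k x * kdelta k j)); last by move=> k; rewrite Hd.
rewrite (sumI_ext (f := fun k => eps x x i k * _) (g := fun k => kdelta i k * pd (fun y => eps y x k j) c x));
  last by move=> k; rewrite Hd.
rewrite sumI_kdelta sumI_kdelta'. lra.
Qed.

Definition gc a c := sumI (fun b => pd (P a b b) c x)
   - sumI (fun b => sumI (fun m => P a b m x * P c m b x)).

Lemma hp_omega a c : has_pd (fun y => (omega eps).1 y a) c x (gc a c).
Proof.
apply: (hp_loc (f := fun y => sumI (fun b => sumI (fun m => P a b m y * eps y x m b))) Uo Ux).
  move=> y Uy /=. apply: sumI_ext => b. by rewrite Gam.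
have H : has_pd (fun y => sumI (fun b => sumI (fun m => P a b m y * eps y x m b))) c x
  (sumI (fun b => sumI (fun m => pd (P a b m) c x * eps x x m b + P a b m x * pd (fun y => eps y x m b) c x))).
  apply: hp_sum => b; apply: hp_sum => m; apply: hp_mul.
    exact: (Ck_S_hp c (Ck_S_pd a (E_smooth b m 2)) Ux).
  exact: (Ck_S_hp c (F_smooth m b 1) Ux).
apply: (hp_eq _ H). case: Hs => [_ [_ Hd]]. rewrite /gc -sumI_sub. apply: sumI_ext => b.
rewrite sumI_add. rewrite (sumI_ext (g := fun m => pd (P a b m) c x * kdelta m b)); last by move=> m; rewrite Hd.
rewrite sumI_kdelta /Rminus -sumI_opp. congr (_ + _). apply: sumI_ext => m. rewrite dF. ring.
Qed.

Lemma gc_sym a c : gc a c = gc c a.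
Proof.
case: (eqVneq a c) => [->|ac] //. rewrite /gc. congr (_ - _).
  apply: sumI_ext => b. rewrite /P. apply: (schwarz_pd Uo Ux) => //.
    by rewrite eq_sym.
  exact: E_smooth.
rewrite sumI_swap. apply: sumI_ext => b; apply: sumI_ext => m; ring.
Qed.
End Split.
Theorem proposition6 (n : nat) (U : ('I_n -> R) -> Prop)
    (eps : ('I_n -> R) -> ('I_n -> R) -> 'I_n -> 'I_n -> R) :
  (2 <= n)%N -> is_open U -> is_splitting U eps ->
  (forall (W : ('I_n -> R) -> Prop) (X Y : jsec n),
      is_open W -> (forall x, W x -> U x) ->
      smooth_sec W X -> smooth_sec W Y ->
      forall x, W x -> dform (omega eps) X Y x = 0)
  /\
  ~ (exists (W : ('I_n -> R) -> Prop) (f : ('I_n -> R) -> R),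
      is_open W /\ (exists x, W x) /\ (forall x, W x -> U x) /\ smooth W f /\
      forall x, W x ->
        (forall i, (dfun f).1 x i = (omega eps).1 x i) /\
        (forall i j, (dfun f).2 x i j = (omega eps).2 x i j)).
Proof.
move=> n2 Uo Hs. split.
  move=> W X Y Wo WU HX HY x Wx. have Ux := WU x Wx.
  have DZ : forall Z : jsec n, smooth_sec W Z -> forall c,
      pd (ev (omega eps) Z) c x =
      sumI (fun a => pd (fun z => Z.1 z a) c x * (omega eps).1 x a + Z.1 x a * gc eps x a c)
      + sumI (fun a => sumI (fun b => pd (fun z => Z.2 z a b) c x * - kdelta b a + Z.2 x a b * 0)).
    move=> Z [Z1 Z2] c. apply: pd_unique. rewrite /ev.
    apply: hp_add; apply: hp_sum => a.
      apply: hp_mul; first exact: (Ck_S_hp c (Z1 a 1%N) Wx).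
      exact: (hp_omega Uo Hs Ux).
    apply: hp_sum => b. apply: hp_mul; first exact: (Ck_S_hp c (Z2 a b 1%N) Wx).
    exact: hp_const.
  rewrite /dform /vf.
  have EZ : forall (Z Z' : jsec n), smooth_sec W Z ->
     sumI (fun c => Z'.1 x c * pd (ev (omega eps) Z) c x) =
     sumI (fun c => Z'.1 x c * (sumI (fun a => pd (fun z => Z.1 z a) c x * (omega eps).1 x a + Z.1 x a * gc eps x a c)
      + sumI (fun a => sumI (fun b => pd (fun z => Z.2 z a b) c x * - kdelta b a + Z.2 x a b * 0)))).
    move=> Z Z' HZ. apply: sumI_ext => c. by rewrite (DZ Z HZ c).
  rewrite (EZ Y X HY) (EZ X Y HX).
  rewrite /ev /bracket /brv /brm /=.
  exact: (@alg _ (fun c => X.1 x c) (fun c => Y.1 x c)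
    (fun a b => X.2 x a b) (fun a b => Y.2 x a b)
    (fun c a => pd (fun z => X.1 z a) c x) (fun c a => pd (fun z => Y.1 z a) c x)
    (fun c a b => pd (fun z => X.2 z a b) c x) (fun c a b => pd (fun z => Y.2 z a b) c x)
    (fun a => sumI (fun b => Gamma eps b a b x)) (fun a c => gc eps x a c)
    (fun a c => gc_sym Uo Hs Ux a c)).
move=> [W [f [_ [[y Wy] [_ [_ H]]]]]].
have i : 'I_n by exists 0%N; apply: leq_trans n2.
case: (H y Wy) => _ H2. have := H2 i i. rewrite /= /kdelta eq_refl. lra.
Qed.
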